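(* Suppose $\sum_{r:\rho_r\le 1/(4k^2)}\rho_r(1-\rho_r)^k\le\frac{1-\tau}{2}$, and let $\Delta\in(0,1)$ and $\rho_{\max}:=\max_r\rho_r$. (i) If $\rho_{\max}\le\frac12$ and $N\ge 132k^2\ln(2R/\Delta)$, then with probability at least $1-\Delta$, $1-\widehat\tau\ge\frac{1-\tau}{4}$. (ii) If $\rho_{\max}>\frac12$ and $N\ge164k^2\ln(4R/\Delta)+\frac{25\ln(2/\Delta)}{1-\rho_{\max}}$, then with probability at least $1-\Delta$, $1-\widehat\tau\ge\frac{1-\tau}{8}$.
   Context: Let $R\ge 2$ be an integer and $\rho=(\rho_1,\dots,\rho_R)$ a probability vector with $\rho_r>0$ for all $r$. Let $Y_1,\dots,Y_N$ be i.i.d. labels with $\mathbb P(Y_j=r)=\rho_r$, $N_r=|\{j:Y_j=r\}|$, $\widehat\rho_r=N_r/N$. Fix an integer $k\ge1$. Set $\tau:=1-\sum_{r}\rho_r(1-\rho_r)^k$ and $\widehat\tau:=1-\sum_r\widehat\rho_r(1-\widehat\rho_r)^k$. *)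

(* Defs.v *)
From HB Require Import structures.
From mathcomp Require Import all_boot all_order all_algebra.
From mathcomp Require Import reals exp.
Set Implicit Arguments. Unset Strict Implicit. Unset Printing Implicit Defensive.
Import Order.TTheory GRing.Theory Num.Theory.
Local Open Scope ring_scope.

(* Labels take values in 'I_m (m = R in the paper); a sample of size N is
   y : {ffun 'I_N -> 'I_m}, y j = Y_{j+1}. *)

Definition sample_prob {R : realType} {m N : nat} (rho : 'I_m -> R)
  (E : pred {ffun 'I_N -> 'I_m}) : R :=
  \sum_(y | E y) \prod_(j < N) rho (y j).

Definition label_count {m N : nat} (y : {ffun 'I_N -> 'I_m}) (r : 'I_m) : nat :=
  #|[set j : 'I_N | y j == r]|.

Definition rho_hat {R : realType} {m N : nat} (y : {ffun 'I_N -> 'I_m}) (r : 'I_m) : R :=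
  (label_count y r)%:R / N%:R.

Definition tau_of {R : realType} {m : nat} (k : nat) (rho : 'I_m -> R) : R :=
  1 - \sum_(r < m) rho r * (1 - rho r) ^+ k.

Definition rho_max {R : realType} {m : nat} (rho : 'I_m -> R) : R :=
  \big[Num.max/0]_(r < m) rho r.

(* Main.v *)
Require Import Defs.
From HB Require Import structures.
From mathcomp Require Import all_boot all_order all_algebra.
From mathcomp Require Import boolp classical_sets functions reals topology tvs normedtype sequences exp.
From mathcomp Require Import ring lra.
Import numFieldNormedType.Exports.
Import Order.TTheory GRing.Theory Num.Theory.
Local Open Scope ring_scope.
Definition cnt {m N : nat} (P : pred 'I_m) (y : {ffun 'I_N -> 'I_m}) : nat :=
  #|[set j : 'I_N | P (y j)]|.
Definition wt {R : realType} {m N : nat} (rho : 'I_m -> R) (y : {ffun 'I_N -> 'I_m}) : R :=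
  \prod_(j < N) rho (y j).

Lemma mgf (R : realType) (m N : nat) (rho : 'I_m -> R) (P : pred 'I_m) (c : R) :
  \sum_(r < m) rho r = 1 ->
  \sum_(y : {ffun 'I_N -> 'I_m}) wt rho y * c ^+ cnt P y
    = (1 - \sum_(i | P i) rho i + (\sum_(i | P i) rho i) * c) ^+ N.
Proof.
move=> hs.
have e1 y : wt rho y * c ^+ cnt P y = \prod_(j < N) (rho (y j) * (if P (y j) then c else 1)).
  rewrite big_split /= /wt; congr (_ * _).
  rewrite -big_mkcond /= prodr_const /cnt; congr (_ ^+ _).
  by rewrite cardsE.
rewrite (eq_bigr _ (fun y _ => e1 y)).
rewrite -(bigA_distr_bigA (fun (_ : 'I_N) i => rho i * (if P i then c else 1))) /= prodr_const card_ord.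
congr (_ ^+ _).
rewrite (bigID P) /=.
rewrite (eq_bigr (fun i => rho i * c)); last by move=> i ->.
rewrite (eq_bigr (fun i => rho i) (P := fun i => ~~ P i)); last by move=> i /negbTE ->; rewrite mulr1.
rewrite -big_distrl /=.
have : \sum_(i | P i) rho i + \sum_(i | ~~ P i) rho i = 1 by rewrite -hs [RHS](bigID P).
lra.
Qed.
Lemma expR_ge2 {R : realType} (x : R) : 0 <= x -> 1 + x + x ^+ 2 / 2 <= expR x.
Proof.
move=> x_ge0; rewrite /expR.
pose f (i : nat) : R := (i == 0)%:R + x *+ (i == 1) + x ^+ 2 / 2 *+ (i == 2).
have F m : (2 < m)%N -> \sum_(0 <= i < m) f i = 1 + x + x ^+ 2 / 2.
  move=> m2.
  rewrite (@big_cat_nat _ _ _ 3)//=.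
  have -> : \sum_(0 <= i < 3) f i = 1 + x + x ^+ 2 / 2.
    by rewrite !big_nat_recl// big_geq// /f /= !mulr0n !mulr1n !addr0 !add0r addrA.
  rewrite big_nat_cond big1 ?addr0; last first.
    move=> i /andP[/andP[i3 _] _].
    have h1 : (1 < i)%N by apply: ltn_trans i3.
    have h0 : (0 < i)%N by apply: ltn_trans h1.
    by rewrite /f (gtn_eqF i3) (gtn_eqF h1) (gtn_eqF h0) /= !mulr0n !addr0.
  by [].
rewrite [leLHS](_ : _ = limn (series f)); last first.
  by apply/esym/(@lim_near_cst R^o) => //; near=> k; apply: F; near: k.
apply: ler_lim; first by apply: is_cvg_near_cst; near=> k; apply: F; near: k.
  exact: is_cvg_series_exp_coeff.
near=> k; apply: ler_sum => -[|[|[|i]]] _; rewrite /f /exp_coeff/= ?add0r.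
- by rewrite !(mulr0n, expr0, addr0, divr1).
- by rewrite !(mulr0n, mulr1n, expr1, addr0, add0r, divr1).
- by rewrite !(mulr0n, mulr1n, addr0, add0r).
- by rewrite divr_ge0// exprn_ge0.
Unshelve. all: by end_near. Qed.

Lemma expRN_le {R : realType} (e : R) : 0 <= e -> expR (- e) <= 1 - e + e ^+ 2 / 2.
Proof.
move=> e0; have h := @expR_ge2 _ e e0.
have hp : 0 < 1 + e + e ^+ 2 / 2 by rewrite expr2; nra.
rewrite expRN (@le_trans _ _ ((1 + e + e ^+ 2 / 2)^-1)) //.
  by rewrite lef_pV2 ?posrE ?expR_gt0.
rewrite -[X in X <= _]mul1r ler_pdivrMr //.
rewrite expr2 in hp *; nra.
Qed.

Lemma markov (R : realType) (m N : nat) (rho : 'I_m -> R) (E : pred {ffun 'I_N -> 'I_m})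
  (g : {ffun 'I_N -> 'I_m} -> R) :
  (forall r, 0 <= rho r) -> (forall y, 0 <= g y) -> (forall y, E y -> 1 <= g y) ->
  sample_prob rho E <= \sum_y wt rho y * g y.
Proof.
move=> h0 g0 gE; rewrite /sample_prob.
have w0 y : 0 <= wt rho y by apply: prodr_ge0.
rewrite [leRHS](bigID E) /= -[leLHS]addr0 lerD //; last first.
  by apply: sumr_ge0 => y _; rewrite mulr_ge0.
apply: ler_sum => y Ey; rewrite -[leLHS]mulr1; apply: ler_wpM2l => //.
  exact: w0.
exact: gE.
Qed.

Lemma psum_le1 (R : realType) (m : nat) (rho : 'I_m -> R) (P : pred 'I_m) :
  (forall r, 0 <= rho r) -> \sum_(r < m) rho r = 1 -> 0 <= \sum_(i | P i) rho i <= 1.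
Proof.
move=> h0 hs; rewrite sumr_ge0 //= -hs [leRHS](bigID P) /= lerDl.
by apply: sumr_ge0.
Qed.

Lemma lower_tail (R : realType) (m N : nat) (rho : 'I_m -> R) (P : pred 'I_m) (e : R) :
  (forall r, 0 <= rho r) -> \sum_(r < m) rho r = 1 -> 0 <= e ->
  sample_prob rho (fun y : {ffun 'I_N -> 'I_m} =>
     (cnt P y)%:R <= N%:R * (\sum_(i | P i) rho i) * (1 - e))
  <= expR (- (N%:R * (\sum_(i | P i) rho i) * e ^+ 2 / 2)).
Proof.
move=> h0 hs e0.
set p := \sum_(i | P i) rho i.
have /andP[p0 p1] : 0 <= p <= 1 by exact: psum_le1.
set a := N%:R * p * (1 - e).
pose g (y : {ffun 'I_N -> 'I_m}) := expR (- e) ^+ cnt P y * expR (e * a).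
apply: (le_trans (@markov _ _ _ rho _ g _ _ _)) => //.
- by move=> y; rewrite /g mulr_ge0 ?exprn_ge0 ?expR_ge0.
- move=> y Ey; rewrite /g -expRM_natl -expRD; apply: le_trans (expR_ge1Dx _).
  have : e * (cnt P y)%:R <= e * a by rewrite ler_wpM2l.
  rewrite mulrN [_ * e]mulrC.
  lra.
rewrite /g.
under eq_bigr => y _ do rewrite mulrA.
rewrite -big_distrl /= mgf // -/p.
have hb0 : 0 <= 1 - p + p * expR (- e).
  have : 0 <= p * expR (- e) by rewrite mulr_ge0 ?expR_ge0.
  lra.
have hb : 1 - p + p * expR (- e) <= expR (- (p * (1 - expR (- e)))).
  by rewrite (le_trans _ (expR_ge1Dx _)) //; lra.
apply: (le_trans (ler_wpM2r (expR_ge0 _) (lerXn2r N hb0 (expR_ge0 _) hb))) => //.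
rewrite -expRM_natl -expRD ler_expR /a.
have hE := @expRN_le _ e e0.
have hN : 0 <= N%:R * p :> R by rewrite mulr_ge0.
have := mulr_ge0 hN (_ : 0 <= 1 - e + e ^+ 2 / 2 - expR (- e)).
rewrite subr_ge0 => /(_ hE).
rewrite expr2; nra.
Qed.

Lemma upper_tail (R : realType) (m N : nat) (rho : 'I_m -> R) (P : pred 'I_m) (t s : R) :
  (forall r, 0 <= rho r) -> \sum_(r < m) rho r = 1 -> 0 <= t < 1 ->
  sample_prob rho (fun y : {ffun 'I_N -> 'I_m} =>
     N%:R * (\sum_(i | P i) rho i) + s <= (cnt P y)%:R)
  <= expR (N%:R * (\sum_(i | P i) rho i) * (t ^+ 2 / (1 - t)) - t * s).
Proof.
move=> h0 hs /andP[t0 t1].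
set p := \sum_(i | P i) rho i.
have /andP[p0 p1] : 0 <= p <= 1 by exact: psum_le1.
set a := N%:R * p + s.
pose g (y : {ffun 'I_N -> 'I_m}) := expR t ^+ cnt P y * expR (- (t * a)).
apply: (le_trans (@markov _ _ _ rho _ g _ _ _)) => //.
- by move=> y; rewrite /g mulr_ge0 ?exprn_ge0 ?expR_ge0.
- move=> y Ey; rewrite /g -expRM_natl -expRD; apply: le_trans (expR_ge1Dx _).
  have : t * a <= t * (cnt P y)%:R by rewrite ler_wpM2l.
  rewrite [_ * t]mulrC.
  lra.
rewrite /g.
under eq_bigr => y _ do rewrite mulrA.
rewrite -big_distrl /= mgf // -/p.
have hb0 : 0 <= 1 - p + p * expR t.
  have : 0 <= p * expR t by rewrite mulr_ge0 ?expR_ge0.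
  lra.
have hb : 1 - p + p * expR t <= expR (p * (expR t - 1)).
  by rewrite (le_trans _ (expR_ge1Dx _)) //; lra.
apply: (le_trans (ler_wpM2r (expR_ge0 _) (lerXn2r N hb0 (expR_ge0 _) hb))) => //.
rewrite -expRM_natl -expRD ler_expR /a.
have ht : 0 < 1 - t by lra.
have hE : expR t <= 1 + t + t ^+ 2 / (1 - t).
  have -> : 1 + t + t ^+ 2 / (1 - t) = (1 - t)^-1 by field; lra.
  have h1 := expR_ge1Dx (- t).
  rewrite expRN in h1.
  have he := expR_gt0 t.
  rewrite -div1r ler_pdivlMr //.
  rewrite -div1r ler_pdivlMr // in h1; lra.
have hN : 0 <= N%:R * p :> R by rewrite mulr_ge0.
have := mulr_ge0 hN (_ : 0 <= 1 + t + t ^+ 2 / (1 - t) - expR t).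
rewrite subr_ge0 => /(_ hE).
nra.
Qed.

Lemma total_mass (R : realType) (m N : nat) (rho : 'I_m -> R) :
  \sum_(r < m) rho r = 1 -> \sum_(y : {ffun 'I_N -> 'I_m}) wt rho y = 1.
Proof.
move=> hs; have := @mgf R m N rho pred0 1 hs.
under eq_bigr => y _ do rewrite expr1n mulr1.
move=> ->; rewrite big_pred0 //; by rewrite mul0r subr0 addr0 expr1n.
Qed.

Lemma union_bound (R : realType) (m N : nat) (rho : 'I_m -> R) (I : finType)
  (bad : I -> pred {ffun 'I_N -> 'I_m}) (E : pred {ffun 'I_N -> 'I_m}) :
  (forall r, 0 <= rho r) -> \sum_(r < m) rho r = 1 ->
  (forall y, (forall i, ~~ bad i y) -> E y) ->
  1 - \sum_i sample_prob rho (bad i) <= sample_prob rho E.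
Proof.
move=> h0 hs hE.
have w0 y : 0 <= wt rho y by apply: prodr_ge0.
rewrite -(@total_mass R m N rho hs) (bigID E) /=.
suff : \sum_(y | ~~ E y) wt rho y <= \sum_i sample_prob rho (bad i).
  rewrite /sample_prob -/(wt rho _); lra.
apply: (@le_trans _ _ (\sum_(y | ~~ E y) wt rho y * \sum_i (bad i y)%:R)).
  apply: ler_sum => y nEy; rewrite -[leLHS]mulr1 ler_wpM2l //.
  case: (boolP [exists i, bad i y]) => [/existsP [i Bi]|].
    rewrite (bigD1 i) //= Bi lerDl; apply: sumr_ge0 => j _; exact: ler0n.
  move=> /existsPn nb; by rewrite hE in nEy.
apply: (@le_trans _ _ (\sum_y wt rho y * \sum_i (bad i y)%:R)).
  rewrite [leRHS](bigID (fun y => ~~ E y)) /= lerDl.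
  by apply: sumr_ge0 => y _; rewrite mulr_ge0 // sumr_ge0 // => i _; exact: ler0n.
under eq_bigr => y _ do rewrite big_distrr /=.
rewrite exchange_big /=; apply: ler_sum => i _.
rewrite /sample_prob [leLHS](bigID (bad i)) /= [X in _ + X]big1; last first.
  by move=> y /negbTE ->; rewrite mulr0.
by rewrite addr0; apply: ler_sum => y ->; rewrite mulr1.
Qed.

Definition fS {R : realType} (k : nat) (x : R) : R := x * (1 - x) ^+ k.

Lemma bernoulli {R : realType} (k : nat) (x : R) : 0 <= x <= 1 -> 1 - k%:R * x <= (1 - x) ^+ k.
Proof.
move=> /andP[x0 x1]; elim: k => [|k IH]; first by rewrite mul0r subr0 expr0.
rewrite exprS -natr1.
have h0 : 0 <= 1 - x by lra.
have := ler_wpM2l h0 IH.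
have : 0 <= k%:R * x * x :> R by rewrite !mulr_ge0 ?ler0n.
nra.
Qed.

Lemma cnt_le {m N : nat} (P : pred 'I_m) (y : {ffun 'I_N -> 'I_m}) : (cnt P y <= N)%N.
Proof. by rewrite /cnt (leq_trans (max_card _)) // card_ord. Qed.

Lemma cntC {m N : nat} (P : pred 'I_m) (y : {ffun 'I_N -> 'I_m}) :
  (cnt P y + cnt (predC P) y = N)%N.
Proof.
rewrite /cnt -[RHS](card_ord N) -(cardsC [set j | P (y j)]); congr (_ + _)%N.
by apply: eq_card => j; rewrite !inE.
Qed.

Lemma fS_ge0 {R : realType} k (x : R) : 0 <= x <= 1 -> 0 <= fS k x.
Proof. by move=> /andP[x0 x1]; rewrite /fS mulr_ge0 // exprn_ge0 // subr_ge0. Qed.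

Lemma label_det {R : realType} (k N : nat) (p : R) (c : nat) :
  (1 <= k)%N -> (0 < N)%N -> 0 < p <= 1 / 2 -> (c <= N)%N ->
  ~~ (c%:R <= N%:R * p * (1 - 1 / 4)) ->
  ~~ (N%:R * p + N%:R * (1 - p) / (3 * k%:R) <= c%:R) ->
  fS k p / 2 <= fS k (c%:R / N%:R).
Proof.
move=> k1 N0 /andP[p0 p1] cN; rewrite -!ltNge => hl hu.
have NR : 0 < N%:R :> R by rewrite ltr0n.
have kR : 1 <= k%:R :> R by rewrite ler1n.
set h := c%:R / N%:R.
have hl' : 3 / 4 * p <= h.
  by rewrite /h ler_pdivlMr //; lra.
have hu' : h <= p + (1 - p) / (3 * k%:R).
  rewrite /h ler_pdivrMr //; rewrite mulrDl [X in _ <= _ + X]mulrC mulrA.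
  rewrite [p * _]mulrC; lra.
have ha : (1 - p) * (1 - 1 / (3 * k%:R)) <= 1 - h.
  have -> : (1 - p) * (1 - 1 / (3 * k%:R)) = 1 - (p + (1 - p) / (3 * k%:R)) by field; lra.
  lra.
have hb : 0 <= 1 / (3 * (k%:R : R)) <= 1.
  apply/andP; split; first by rewrite divr_ge0 // mulr_ge0 //; lra.
  by rewrite ler_pdivrMr; lra.
have hc := @bernoulli R k _ hb.
have hk : k%:R * (1 / (3 * k%:R)) = 1 / 3 :> R by field; lra.
rewrite hk in hc.
have e0 : 0 <= (1 - p) * (1 - 1 / (3 * k%:R)).
  by rewrite mulr_ge0 //; move: hb => /andP[_ ?]; lra.
have hd := lerXn2r k e0 (le_trans e0 ha) ha.
rewrite exprMn in hd.
have hp : 0 <= (1 - p) ^+ k by rewrite exprn_ge0 //; lra.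
have he : (1 - p) ^+ k * (2 / 3) <= (1 - h) ^+ k.
  apply: le_trans hd; apply: ler_wpM2l => //; lra.
rewrite /fS.
have := ler_pM (_ : 0 <= 3 / 4 * p) (_ : 0 <= (1 - p) ^+ k * (2 / 3)) hl' he.
move=> /(_ _ _); rewrite ?mulr_ge0 //; try lra.
Qed.

Definition lowE {R : realType} {m N : nat} (rho : 'I_m -> R) (r : 'I_m) : pred {ffun 'I_N -> 'I_m} :=
  fun y => (cnt (pred1 r) y)%:R <= N%:R * (\sum_(i | pred1 r i) rho i) * (1 - 1 / 4).
Definition upE {R : realType} {m N : nat} (rho : 'I_m -> R) (k : nat) (r : 'I_m) : pred {ffun 'I_N -> 'I_m} :=
  fun y => N%:R * (\sum_(i | pred1 r i) rho i) + N%:R * (1 - rho r) / (3 * k%:R) <= (cnt (pred1 r) y)%:R.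

Lemma label_prob (R : realType) (m N : nat) (rho : 'I_m -> R) (k : nat) (r : 'I_m) (l : R) :
  (forall r, 0 <= rho r) -> \sum_(r < m) rho r = 1 -> (1 <= k)%N -> 0 <= l ->
  132 * (k%:R) ^+ 2 * l <= N%:R -> 1 / (4 * (k%:R) ^+ 2) < rho r <= 1 / 2 ->
  sample_prob rho (@lowE R m N rho r) <= expR (- l) /\
  sample_prob rho (@upE R m N rho k r) <= expR (- l).
Proof.
move=> h0 hs k1 l0 hN /andP[pl pu].
have ps : \sum_(i | pred1 r i) rho i = rho r by rewrite big_pred1_eq.
have kR : 1 <= k%:R :> R by rewrite ler1n.
move: hN pl pu kR ps; set K := (k%:R : R); set p := rho r; move=> hN pl pu kR ps.
have K2 : 1 <= K ^+ 2 by rewrite expr2; nra.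
have p0 : 0 <= p by exact: h0.
have pK : 1 / 4 <= K ^+ 2 * p.
  move: pl; rewrite ltr_pdivrMr; last by lra.
  nra.
split.
  apply: (le_trans (@lower_tail R m N rho (pred1 r) (1 / 4) h0 hs _)); first lra.
  rewrite ler_expR ps -/p.
  have hNp : 132 * K ^+ 2 * l * p <= N%:R * p.
    by apply: ler_wpM2r => //; exact: h0.
  have : 0 <= (K ^+ 2 * p - 1 / 4) * l by rewrite mulr_ge0 //; lra.
  nra.
set t : R := 1 / (6 * K).
have t0 : 0 <= t < 1.
  apply/andP; split; first by rewrite divr_ge0 //; lra.
  by rewrite ltr_pdivrMr; lra.
apply: (le_trans (@upper_tail R m N rho (pred1 r) t (N%:R * (1 - p) / (3 * K)) h0 hs t0)).
rewrite ler_expR ps.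
have hs2 : N%:R * (1 - p) / (3 * K) = 2 * t * (N%:R * (1 - p)) by rewrite /t; field; lra.
have Kt : K * t = 1 / 6 by rewrite /t; field; lra.
have tp : 0 < t by rewrite /t divr_gt0 //; lra.
have ht : t ^+ 2 / (1 - t) <= 6 / 5 * t ^+ 2.
  move: t0 => /andP[_ t1].
  rewrite ler_pdivrMr; last by lra.
  have t6 : t <= 1 / 6 by rewrite -Kt; nra.
  have : 0 <= t ^+ 2 by rewrite exprn_ge0 // ltW.
  nra.
rewrite hs2.
have N0 : 0 <= N%:R :> R by rewrite ler0n.
have h1 := ler_wpM2l (mulr_ge0 N0 p0) ht.
have hK : K ^+ 2 * t ^+ 2 = 1 / 36 by rewrite -exprMn Kt; field.
have t2 : 0 <= t ^+ 2 by rewrite exprn_ge0 // ltW.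
have hNt : 132 * l / 36 <= N%:R * t ^+ 2.
  have h2 := ler_wpM2r t2 hN.
  have e : 132 * K ^+ 2 * l * t ^+ 2 = 132 * l * (K ^+ 2 * t ^+ 2) by ring.
  rewrite e hK in h2; lra.
have hq : 0 <= 1 / 2 - p by lra.
have := mulr_ge0 (mulr_ge0 N0 t2) hq.
nra.
Qed.

Lemma rmax_ge (R : realType) (m : nat) (rho : 'I_m -> R) (r : 'I_m) : rho r <= rho_max rho.
Proof. by rewrite /rho_max (bigD1 r) //= le_max lexx. Qed.

Lemma rmax_att (R : realType) (m : nat) (rho : 'I_m -> R) :
  0 < rho_max rho -> exists r, rho_max rho = rho r.
Proof.
rewrite /rho_max.
elim/big_ind: _ => [|x y IHx IHy|r _]; first by rewrite ltxx.
  by rewrite /Num.max; case: ifP => _; [apply: IHy|apply: IHx].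
by exists r.
Qed.

Lemma tau_eq (R : realType) (m k : nat) (rho : 'I_m -> R) :
  1 - tau_of k rho = \sum_(r < m) fS k (rho r).
Proof. by rewrite /tau_of opprB addrC subrK. Qed.

Lemma rho_hat01 (R : realType) (m N : nat) (y : {ffun 'I_N -> 'I_m}) (r : 'I_m) :
  (0 < N)%N -> 0 <= (rho_hat y r : R) <= 1.
Proof.
move=> N0; rewrite /rho_hat divr_ge0 ?ler0n //= ler_pdivrMr ?ltr0n // mul1r ler_nat.
exact: (cnt_le (pred1 r) y).
Qed.

Lemma det_sum (R : realType) (m N k : nat) (rho : 'I_m -> R) (y : {ffun 'I_N -> 'I_m})
  (A : pred 'I_m) : (0 < N)%N ->
  (forall r, A r -> fS k (rho r) / 2 <= fS k (rho_hat y r)) ->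
  \sum_(r < m | A r) fS k (rho r) / 2 <= \sum_(r < m) fS k (rho_hat y r).
Proof.
move=> N0 hA; rewrite [leRHS](bigID A) /= -[leLHS]addr0 lerD //.
  exact: ler_sum.
by apply: sumr_ge0 => r _; apply: fS_ge0; apply: rho_hat01.
Qed.

Lemma sum_bad (R : realType) (I : finType) (f : I -> R) (c : R) :
  (forall i, f i <= c) -> \sum_i f i <= c *+ #|I|.
Proof. by move=> h; rewrite -sumr_const; apply: ler_sum. Qed.

Lemma prob0 (R : realType) (m N : nat) (rho : 'I_m -> R) :
  sample_prob rho (@pred0 {ffun 'I_N -> 'I_m}) = 0.
Proof. by rewrite /sample_prob big_pred0. Qed.

Lemma label_cnt (R : realType) (m N : nat) (y : {ffun 'I_N -> 'I_m}) r :
  rho_hat y r = (cnt (pred1 r) y)%:R / N%:R :> R.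
Proof. by []. Qed.

Lemma case1 (R : realType) (m : nat) (rho : 'I_m -> R) (k N : nat) (Delta : R) :
  (2 <= m)%N ->
  (forall r, 0 < rho r) ->
  \sum_(r < m) rho r = 1 ->
  (1 <= k)%N ->
  \sum_(r < m | rho r <= 1 / (4 * (k%:R) ^+ 2)) rho r * (1 - rho r) ^+ k
    <= (1 - tau_of k rho) / 2 ->
  0 < Delta < 1 ->
  rho_max rho <= 1 / 2 ->
  132 * (k%:R) ^+ 2 * ln (2 * m%:R / Delta) <= N%:R ->
  1 - Delta <= sample_prob rho
     (fun y : {ffun 'I_N -> 'I_m} =>
        (1 - tau_of k rho) / 4 <= 1 - tau_of k (rho_hat y)).
Proof.
move=> m2 hpos hs k1 hsm /andP[D0 D1] hmax hN.
have h0 r : 0 <= rho r by apply: ltW.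
have mR : 2 <= m%:R :> R by rewrite ler_nat.
set l := ln (2 * m%:R / Delta).
have q0 : 0 < 2 * m%:R / Delta by rewrite divr_gt0 //; lra.
have q1 : 1 < 2 * m%:R / Delta by rewrite ltr_pdivlMr //; lra.
have l0 : 0 < l by apply: ln_gt0.
have el : expR (- l) = Delta / (2 * m%:R).
  by rewrite expRN lnK ?posrE // invf_div.
have kR : 1 <= k%:R :> R by rewrite ler1n.
have N0 : (0 < N)%N.
  rewrite -(ltr0n R); apply: lt_le_trans hN.
  by rewrite !mulr_gt0 //; lra.
pose L r := ~~ (rho r <= 1 / (4 * (k%:R) ^+ 2)).
pose bad (i : 'I_m * bool) : pred {ffun 'I_N -> 'I_m} :=
  if L i.1 then (if i.2 then upE rho k i.1 else lowE rho i.1) else pred0.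
apply: (le_trans _ (@union_bound R m N rho _ bad _ h0 hs _)).
  suff : \sum_i sample_prob rho (bad i) <= Delta by lra.
  apply: le_trans (@sum_bad R _ _ (Delta / (2 * m%:R)) _) _.
    case=> r b; rewrite /bad /=; case: ifP => Lr; last first.
      by rewrite prob0 divr_ge0 //; lra.
    move: Lr; rewrite /L /= => Lr.
    have hr : 1 / (4 * (k%:R) ^+ 2) < rho r <= 1 / 2.
      by rewrite ltNge Lr /= (le_trans (@rmax_ge R m rho r)).
    have [hlo hup] := @label_prob R m N rho k r l h0 hs k1 (ltW l0) hN hr.
    by case: b; rewrite -el.
  rewrite card_prod card_ord card_bool -[X in X <= _]mulr_natr natrM.
  by rewrite le_eqVlt; apply/orP; left; apply/eqP; field; lra.
move=> y hy.
rewrite !tau_eq.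
have hA : forall r, L r -> fS k (rho r) / 2 <= fS k (rho_hat y r).
  move=> r Lr.
  have hl := hy (r, false); have hu := hy (r, true).
  rewrite /bad /= Lr in hl hu.
  rewrite /lowE /upE big_pred1_eq in hl hu.
  rewrite label_cnt.
  apply: label_det => //.
    by rewrite hpos /= (le_trans (@rmax_ge R m rho r)).
  exact: cnt_le.
have h1 := @det_sum R m N k rho y L N0 hA.
rewrite -big_distrl /= in h1.
have e : \sum_(r < m) fS k (rho r) = \sum_(r < m | rho r <= 1 / (4 * (k%:R) ^+ 2)) fS k (rho r)
   + \sum_(r < m | L r) fS k (rho r) by rewrite (bigID (fun r => rho r <= 1 / (4 * (k%:R) ^+ 2))).
have hsm' : \sum_(r < m | rho r <= 1 / (4 * (k%:R) ^+ 2)) fS k (rho r) <= (\sum_(r < m) fS k (rho r)) / 2.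
  by move: hsm; rewrite tau_eq.
lra.
Qed.

Lemma star_det {R : realType} (k N c1 c2 : nat) (a : R) :
  (1 <= k)%N -> (0 < N)%N -> (c1 + c2 = N)%N -> 0 <= a <= 1 ->
  ~~ (c1%:R <= N%:R * a * (1 - 1 / 2)) ->
  ~~ (c2%:R <= N%:R * (1 - a) * (1 - 1 / (2 * k%:R))) ->
  fS k a / 4 <= fS k (c1%:R / N%:R).
Proof.
move=> k1 N0 hcn /andP[a0 a1]; rewrite -!ltNge => h1 h2.
have NR : 0 < N%:R :> R by rewrite ltr0n.
have kR : 1 <= k%:R :> R by rewrite ler1n.
have hcR : c1%:R + c2%:R = N%:R :> R by rewrite -natrD hcn.
set h := c1%:R / N%:R.
have hl : a / 2 <= h by rewrite /h ler_pdivlMr //; lra.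
have nz : N%:R != 0 :> R by rewrite gt_eqF.
have e1 : 1 - h = c2%:R / N%:R.
  by rewrite /h -[X in X - _](divff nz) -mulrBl; congr (_ / _); lra.
have hq : (1 - a) * (1 - 1 / (2 * k%:R)) <= 1 - h.
  by rewrite e1 ler_pdivlMr //; lra.
have hb : 0 <= 1 / (2 * (k%:R : R)) <= 1.
  apply/andP; split; first by rewrite divr_ge0 // mulr_ge0 //; lra.
  by rewrite ler_pdivrMr; lra.
have hc := @bernoulli R k _ hb.
have hk : (k%:R : R) * (1 / (2 * k%:R)) = 1 / 2.
  by field; rewrite gt_eqF //; lra.
rewrite hk in hc.
have e0 : 0 <= (1 - a) * (1 - 1 / (2 * k%:R)).
  by rewrite mulr_ge0 //; move: hb => /andP[_ ?]; lra.
have hd := lerXn2r k e0 (le_trans e0 hq) hq.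
rewrite exprMn in hd.
have hp : 0 <= (1 - a) ^+ k by rewrite exprn_ge0 //; lra.
have he : (1 - a) ^+ k * (1 / 2) <= (1 - h) ^+ k.
  apply: le_trans hd; apply: ler_wpM2l => //; lra.
rewrite /fS.
have := ler_pM (_ : 0 <= a / 2) (_ : 0 <= (1 - a) ^+ k * (1 / 2)) hl he.
move=> /(_ _ _); rewrite ?mulr_ge0 //; try lra.
Qed.

Lemma pow_small {R : realType} (n : nat) (q : R) : 0 <= q <= 1 / 5 ->
  4 * q ^+ n.+1 <= (1 - q) ^+ n.+1.
Proof.
move=> /andP[q0 q1]; elim: n => [|n IH]; first by rewrite !expr1; lra.
rewrite exprS [X in _ <= X]exprS.
have h1 := ler_wpM2l q0 IH.
have h2 : q * (1 - q) ^+ n.+1 <= (1 - q) * (1 - q) ^+ n.+1.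
  by apply: ler_wpM2r; [rewrite exprn_ge0 //; lra | lra].
lra.
Qed.


Lemma sum_predC (R : realType) (m : nat) (rho : 'I_m -> R) (rs : 'I_m) :
  \sum_(r < m) rho r = 1 -> \sum_(i | predC (pred1 rs) i) rho i = 1 - rho rs.
Proof.
move=> hs; rewrite -hs [X in _ = X - _](bigD1 rs) //= addrC addrK.
by apply: eq_bigl => i.
Qed.

Lemma other_le (R : realType) (m : nat) (rho : 'I_m -> R) (rs r : 'I_m) :
  (forall r, 0 <= rho r) -> \sum_(r < m) rho r = 1 -> r != rs -> rho r <= 1 - rho rs.
Proof.
move=> h0 hs nr; rewrite -(@sum_predC R m rho rs hs) (bigD1 r) //= lerDl.
by apply: sumr_ge0.
Qed.

Lemma exists_other (m : nat) (rs : 'I_m) : (2 <= m)%N -> exists r : 'I_m, r != rs.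
Proof.
move=> m2.
have h0 : (0 < m)%N by apply: ltn_trans m2.
case: (eqVneq rs (Ordinal h0)) => [e|ne]; last by exists (Ordinal h0); rewrite eq_sym.
by exists (Ordinal m2); rewrite e.
Qed.

Lemma S_lower (R : realType) (m k : nat) (rho : 'I_m -> R) (rs : 'I_m) :
  (forall r, 0 <= rho r) -> \sum_(r < m) rho r = 1 ->
  (1 - rho rs) * (1 - (1 - rho rs)) ^+ k <= \sum_(r < m) fS k (rho r).
Proof.
move=> h0 hs.
have h1 r : 0 <= rho r <= 1.
  by rewrite h0 /= -hs (bigD1 r) //= lerDl sumr_ge0.
rewrite (bigD1 rs) //= -[leLHS]add0r lerD //; first by apply: fS_ge0.
have hq := @sum_predC R m rho rs hs.
set q := 1 - rho rs in hq *.
rewrite -{1}hq big_distrl /=.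
apply: ler_sum => i ni; rewrite /fS; apply: ler_wpM2l => //.
have := @other_le R m rho rs i h0 hs ni.
have := h1 i => /andP[a b] c.
have := h1 rs => /andP[d e].
apply: lerXn2r; rewrite ?nnegrE /q; lra.
Qed.

Lemma sub_sum (R : realType) (I : finType) (P Q : pred I) (F : I -> R) :
  (forall i, P i -> Q i) -> (forall i, 0 <= F i) ->
  \sum_(i | P i) F i <= \sum_(i | Q i) F i.
Proof.
move=> PQ F0; rewrite [leRHS](bigID P) /=.
rewrite (eq_bigl P); last by move=> i; case: (boolP (P i)) => [/PQ ->|]; rewrite ?andbF.
by rewrite lerDl sumr_ge0.
Qed.

Lemma fin1 {R : realType} {S H sm AL A B hb Hr : R} :
  S = sm + AL -> sm <= S / 2 -> AL = B + A -> H = hb + Hr -> A / 2 <= Hr ->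
  B / 4 <= hb -> 0 <= A -> S / 8 <= H.
Proof. move=> *; lra. Qed.

Lemma fin2 {R : realType} {S H sm AL A B hb Hr : R} :
  S = sm + AL -> sm <= S / 2 -> AL = B + A -> H = hb + Hr -> A / 2 <= Hr ->
  0 <= hb -> 4 * B <= S -> S / 8 <= H.
Proof. move=> *; lra. Qed.

Lemma case2 (R : realType) (m : nat) (rho : 'I_m -> R) (k N : nat) (Delta : R) :
  (2 <= m)%N ->
  (forall r, 0 < rho r) ->
  \sum_(r < m) rho r = 1 ->
  (1 <= k)%N ->
  \sum_(r < m | rho r <= 1 / (4 * (k%:R) ^+ 2)) rho r * (1 - rho r) ^+ k
    <= (1 - tau_of k rho) / 2 ->
  0 < Delta < 1 ->
  1 / 2 < rho_max rho ->
  164 * (k%:R) ^+ 2 * ln (4 * m%:R / Delta)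
     + 25 * ln (2 / Delta) / (1 - rho_max rho) <= N%:R ->
  1 - Delta <= sample_prob rho
     (fun y : {ffun 'I_N -> 'I_m} =>
        (1 - tau_of k rho) / 8 <= 1 - tau_of k (rho_hat y)).
Proof.
move=> m2 hpos hs k1 hsm /andP[D0 D1] hmax hN.
have h0 r : 0 <= rho r by apply: ltW.
have mR : 2 <= m%:R :> R by rewrite ler_nat.
have kR : 1 <= k%:R :> R by rewrite ler1n.
have hmp : 0 < rho_max rho by lra.
have [rs hrs] := @rmax_att R m rho hmp.
rewrite hrs in hmax hN.
have oth r : r != rs -> rho r <= 1 - rho rs by apply: (@other_le R m rho rs r h0 hs).
have [r' nr'] := @exists_other m rs m2.
have q0 : 0 < 1 - rho rs by apply: lt_le_trans (hpos r') (oth r' nr').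
set l := ln (4 * m%:R / Delta).
have lq1 : 1 < 4 * m%:R / Delta by rewrite ltr_pdivlMr //; lra.
have l0 : 0 < l by apply: ln_gt0.
have el : expR (- l) = Delta / (4 * m%:R).
  by rewrite expRN lnK ?posrE ?(lt_trans _ lq1) // invf_div.
set l2 := ln (2 / Delta).
have l21 : 1 < 2 / Delta by rewrite ltr_pdivlMr //; lra.
have l20 : 0 < l2 by apply: ln_gt0.
set l4 := ln (4 / Delta).
have l41 : 1 < 4 / Delta by rewrite ltr_pdivlMr //; lra.
have e4 : expR (- l4) = Delta / 4.
  by rewrite expRN lnK ?posrE ?(lt_trans _ l41) // invf_div.
have l4l : l4 <= l.
  rewrite ler_ln ?posrE ?(lt_trans _ l41) ?(lt_trans _ lq1) //.
  by rewrite ler_pdivlMr // divfK ?gt_eqF //; lra.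
have l4e : l4 = ln 2 + l2.
  rewrite /l4 /l2 -lnM ?posrE; [by congr ln; rewrite mulrA; congr (_ / _); lra| lra | exact: lt_trans _ l21].
have ln2 : ln 2 <= l2 :> R.
  rewrite ler_ln ?posrE ?(lt_trans _ l21) //.
  by rewrite ler_pdivlMr // mulrC -ler_pdivlMr //; lra.
have ln20 : 0 < ln 2 :> R by apply: ln_gt0; lra.
have k2 : 1 <= (k%:R : R) ^+ 2 by rewrite expr2; nra.
have t25 : 0 <= 25 * l2 / (1 - rho rs) by rewrite divr_ge0 //; lra.
have {}hN : 164 * (k%:R) ^+ 2 * l + 25 * l2 / (1 - rho rs) <= N%:R by exact: hN.
have hN1 : 164 * (k%:R) ^+ 2 * l <= N%:R by lra.
have hN2 : 132 * (k%:R) ^+ 2 * l <= N%:R.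
  have : 0 <= (k%:R : R) ^+ 2 * l by rewrite mulr_ge0 //; lra.
  lra.
have hNq : 164 * (k%:R) ^+ 2 * l * (1 - rho rs) + 25 * l2 <= N%:R * (1 - rho rs).
  have := ler_wpM2r (ltW q0) hN.
  by rewrite mulrDl divfK ?gt_eqF.
have N0 : (0 < N)%N.
  rewrite -(ltr0n R); apply: lt_le_trans hN1.
  by rewrite !mulr_gt0 //; lra.
have ps1 : \sum_(i | pred1 rs i) rho i = rho rs by rewrite big_pred1_eq.
have psC : \sum_(i | predC (pred1 rs) i) rho i = 1 - rho rs by apply: sum_predC.
pose C := (k == 1)%N || (1 / 5 < 1 - rho rs).
pose L r := ~~ (rho r <= 1 / (4 * (k%:R) ^+ 2)).
pose E1 : pred {ffun 'I_N -> 'I_m} := fun y => (cnt (predC (pred1 rs)) y)%:R <=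
   N%:R * (\sum_(i | predC (pred1 rs) i) rho i) * (1 - 1 / (2 * k%:R)).
pose E2 : pred {ffun 'I_N -> 'I_m} := fun y => (cnt (pred1 rs) y)%:R <=
   N%:R * (\sum_(i | pred1 rs i) rho i) * (1 - 1 / 2).
pose bad (i : ('I_m * bool) + bool) : pred {ffun 'I_N -> 'I_m} :=
  match i with
  | inl (r, b) => if L r && (r != rs) then (if b then upE rho k r else lowE rho r) else pred0
  | inr b => if C then (if b then E1 else E2) else pred0
  end.
apply: (le_trans _ (@union_bound R m N rho _ bad _ h0 hs _)).
  suff : \sum_i sample_prob rho (bad i) <= Delta by lra.
  rewrite big_sumType /=.
  have hA : \sum_(i : 'I_m * bool) sample_prob rho (bad (inl i)) <= Delta / 2.
    apply: le_trans (@sum_bad R _ _ (Delta / (4 * m%:R)) _) _.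
      case=> r b; rewrite /bad /=; case: ifP => Lr; last first.
        by rewrite prob0 divr_ge0 //; lra.
      move/andP: Lr => [Lr nr].
      have hr : 1 / (4 * (k%:R) ^+ 2) < rho r <= 1 / 2.
        have Lr' : ~~ (rho r <= 1 / (4 * (k%:R) ^+ 2)) := Lr.
        by rewrite ltNge Lr' /=; have := oth r nr; lra.
      have [hlo hup] := @label_prob R m N rho k r l h0 hs k1 (ltW l0) hN2 hr.
      by case: b; rewrite -el.
    rewrite card_prod card_ord card_bool -[X in X <= _]mulr_natr natrM.
    by rewrite le_eqVlt; apply/orP; left; apply/eqP; field; lra.
  have hB : \sum_(i : bool) sample_prob rho (bad (inr i)) <= Delta / 2.
    apply: le_trans (@sum_bad R _ _ (Delta / 4) _) _; last first.
      by rewrite card_bool; lra.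
    case=> /=; case: ifP => hC; rewrite ?prob0; try (by rewrite divr_ge0 //; lra).
      rewrite /E1 -e4; apply: le_trans (@lower_tail R m N rho (predC (pred1 rs)) _ h0 hs _) _.
        by rewrite divr_ge0 // mulr_ge0 //; lra.
      rewrite ler_expR lerN2 psC.
      have K0 : 0 < (k%:R : R) by lra.
      have e : N%:R * (1 - rho rs) * (1 / (2 * k%:R)) ^+ 2 / 2
          = (N%:R * (1 - rho rs)) / (8 * (k%:R) ^+ 2) :> R.
        by field; rewrite gt_eqF.
      rewrite e ler_pdivlMr; last by lra.
      have l40 : 0 <= l4 by lra.
      have K2l : 0 <= (k%:R : R) ^+ 2 * l4 by rewrite mulr_ge0 //; lra.
      case/orP: hC => [/eqP ek|hq].
        rewrite ek expr1n in hNq *.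
        have : 0 <= l * (1 - rho rs) by rewrite mulr_ge0 //; lra.
        lra.
      have NR : 0 <= N%:R :> R by rewrite ler0n.
      have h5 : N%:R / 5 <= N%:R * (1 - rho rs) by nra.
      have h6 : (k%:R : R) ^+ 2 * l4 <= (k%:R : R) ^+ 2 * l by apply: ler_wpM2l; lra.
      nra.
    rewrite /E2 -e4; apply: le_trans (@lower_tail R m N rho (pred1 rs) _ h0 hs _) _.
      lra.
    rewrite ler_expR lerN2 ps1.
    have NR : 0 <= N%:R :> R by rewrite ler0n.
    have h5 : N%:R / 2 <= N%:R * rho rs by nra.
    have h6 : l <= (k%:R : R) ^+ 2 * l by nra.
    nra.
  lra.
move=> y hy.
rewrite !tau_eq.
have hrs1 : rho rs <= 1 by have := hpos r'; have := oth r' nr'; lra.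
have hA r : L r && (r != rs) -> fS k (rho r) / 2 <= fS k (rho_hat y r).
  move=> Lrs.
  have hl := hy (inl (r, false)); have hu := hy (inl (r, true)).
  rewrite /bad /= Lrs in hl hu.
  rewrite /lowE /upE big_pred1_eq in hl hu.
  rewrite label_cnt.
  move/andP: Lrs => [Lr nr].
  apply: label_det => //.
    by rewrite hpos /=; have := oth r nr; lra.
  exact: cnt_le.
have hstar : C -> fS k (rho rs) / 4 <= fS k (rho_hat y rs).
  move=> hC.
  have h1 := hy (inr true); have h2 := hy (inr false).
  rewrite /bad hC /E1 /E2 psC ps1 in h1 h2.
  rewrite label_cnt.
  apply: (@star_det R k N _ (cnt (predC (pred1 rs)) y)) => //.
    exact: cntC.
  by rewrite h0.
have Lrs : L rs.
  rewrite /L -ltNge (le_lt_trans _ hmax) //.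
  rewrite ler_pdivrMr; last by rewrite mulr_gt0 //; lra.
  lra.
have eS : \sum_(r < m) fS k (rho r) =
    \sum_(r < m | rho r <= 1 / (4 * (k%:R) ^+ 2)) fS k (rho r)
   + \sum_(r < m | L r) fS k (rho r) by rewrite (bigID (fun r => rho r <= 1 / (4 * (k%:R) ^+ 2))).
have eL : \sum_(r < m | L r) fS k (rho r) = fS k (rho rs) + \sum_(r < m | L r && (r != rs)) fS k (rho r).
  by rewrite (bigD1 rs).
have eH : \sum_(r < m) fS k (rho_hat y r : R) = fS k (rho_hat y rs : R) + \sum_(r < m | r != rs) fS k (rho_hat y r : R).
  by rewrite (bigD1 rs).
have hH : (\sum_(r < m | L r && (r != rs)) fS k (rho r)) / 2 <= \sum_(r < m | r != rs) fS k (rho_hat y r : R).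
  rewrite big_distrl /=.
  apply: le_trans (_ : _ <= \sum_(r < m | L r && (r != rs)) fS k (rho_hat y r : R)) _.
    by apply: ler_sum => r; apply: hA.
  apply: sub_sum; first by move=> r /andP[].
  by move=> r /=; apply: fS_ge0; apply: rho_hat01.
have hsm' : \sum_(r < m | rho r <= 1 / (4 * (k%:R) ^+ 2)) fS k (rho r) <= (\sum_(r < m) fS k (rho r)) / 2.
  by move: hsm; rewrite tau_eq.
have hf0 : 0 <= fS k (rho_hat y rs : R) by apply: fS_ge0; apply: rho_hat01.
case hC : C.
  apply: (fin1 eS hsm' eL eH hH (hstar hC)).
  apply: sumr_ge0 => r _; apply: fS_ge0.
  by rewrite h0 /= -hs (bigD1 r) //= lerDl sumr_ge0.
move: hC; rewrite /C => /norP[nk1 hq].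
rewrite -leNgt in hq.
have hSl := @S_lower R m k rho rs h0 hs.
rewrite (_ : 1 - (1 - rho rs) = rho rs) in hSl; last by ring.
have hB : 4 * fS k (rho rs) <= (1 - rho rs) * rho rs ^+ k.
  clear -k1 nk1 hq hrs1 hmax.
  case: k k1 nk1 => [|[|j]] //= _ _.
  have hp := @pow_small R j (1 - rho rs).
  have hq' : 0 <= 1 - rho rs <= 1 / 5 by rewrite hq andbT; lra.
  have {}hp := hp hq'.
  rewrite (_ : 1 - (1 - rho rs) = rho rs) in hp; last by ring.
  have hqr : 0 <= (1 - rho rs) * rho rs by rewrite mulr_ge0 //; lra.
  have := ler_wpM2l hqr hp.
  rewrite /fS !exprS; lra.
exact: (fin2 eS hsm' eL eH hH hf0 (le_trans hB hSl)).
Qed.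

Theorem mainTheorem3 (R : realType) (m : nat) (rho : 'I_m -> R) (k N : nat)
  (Delta : R) :
  (2 <= m)%N ->
  (forall r, 0 < rho r) ->
  \sum_(r < m) rho r = 1 ->
  (1 <= k)%N ->
  \sum_(r < m | rho r <= 1 / (4 * (k%:R) ^+ 2)) rho r * (1 - rho r) ^+ k
    <= (1 - tau_of k rho) / 2 ->
  0 < Delta < 1 ->
  (rho_max rho <= 1 / 2 ->
   132 * (k%:R) ^+ 2 * ln (2 * m%:R / Delta) <= N%:R ->
   1 - Delta <= sample_prob rho
     (fun y : {ffun 'I_N -> 'I_m} =>
        (1 - tau_of k rho) / 4 <= 1 - tau_of k (rho_hat y)))
  /\
  (1 / 2 < rho_max rho ->
   164 * (k%:R) ^+ 2 * ln (4 * m%:R / Delta)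
     + 25 * ln (2 / Delta) / (1 - rho_max rho) <= N%:R ->
   1 - Delta <= sample_prob rho
     (fun y : {ffun 'I_N -> 'I_m} =>
        (1 - tau_of k rho) / 8 <= 1 - tau_of k (rho_hat y))).
Proof.
move=> m2 hpos hs k1 hsm hD; split.
  exact: case1.
exact: case2.
Qed.
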